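(* Let $\mathscr{H}$ be a complex Hilbert space and let $B,C$ be Hilbert–Schmidt operators on $\mathscr{H}$. Then $$w_{(2,e)}^2(B,C)\geq\frac14\,|\mathrm{tr}(B^2)+\mathrm{tr}(C^2)+2\,\mathrm{tr}(BC)|+\frac14\left(\|B\|_2^2+\|C\|_2^2+2\,\mathrm{Re}(\mathrm{tr}(BC^* ))\right),$$ where $\mathrm{Re}(z)$ denotes the real part of $z\in\mathbb{C}$.
   Context: An operator $T$ on $\mathscr{H}$ is Hilbert–Schmidt if $\sum_i\|Te_i\|^2<\infty$ for some (equivalently every) orthonormal basis $\{e_i\}$; its Hilbert–Schmidt norm is $\|T\|_2=(\sum_i\|Te_i\|^2)^{1/2}=(\mathrm{tr}(T^*T))^{1/2}$. For an operator $T$, $\Re(T)=\frac12(T+T^* )$. The Hilbert–Schmidt Euclidean operator radius is $w_{(2,e)}(B,C)=\sup_{\lambda_1,\lambda_2\in\mathbb{C},\ |\lambda_1|^2+|\lambda_2|^2\leq1}\sup_{\theta\in\mathbb{R}}\|\Re(e^{i\theta}(\lambda_1B+\lambda_2C))\|_2$. *)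

(* Defs.v *)
From HB Require Import structures.
From mathcomp Require Import all_boot all_order all_algebra.
From mathcomp Require Import boolp classical_sets reals ereal esum trigo.
From mathcomp Require Import complex.
Set Implicit Arguments. Unset Strict Implicit. Unset Printing Implicit Defensive.
Import Order.TTheory GRing.Theory Num.Theory.
Local Open Scope ring_scope.
Local Open Scope classical_set_scope.

Section HilbertSchmidt.
Variable R : realType.
Local Notation C := R[i].
Variable V : lmodType C.
Variable ip : V -> V -> C.

Definition inner_product_axioms : Prop :=
  [/\ (forall (a : C) (x y z : V), ip (a *: x + y) z = a * ip x z + ip y z),
      (forall x y, ip y x = conjc (ip x y)),
      (forall x, 0 <= ip x x) &
      (forall x, ip x x = 0 -> x = 0)].

Definition vnorm (x : V) : R := Num.sqrt (complex.Re (ip x x)).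

Definition cauchy_seq (u : nat -> V) : Prop :=
  forall eps : R, 0 < eps -> exists N : nat, forall m n : nat,
    (N <= m)%N -> (N <= n)%N -> vnorm (u m - u n) < eps.

Definition converges_to (u : nat -> V) (l : V) : Prop :=
  forall eps : R, 0 < eps -> exists N : nat, forall n : nat,
    (N <= n)%N -> vnorm (u n - l) < eps.

Definition complete_space : Prop :=
  forall u, cauchy_seq u -> exists l, converges_to u l.

Definition hilbert_space : Prop := inner_product_axioms /\ complete_space.

Definition bounded_linear (T : V -> V) : Prop :=
  (forall (a : C) (x y : V), T (a *: x + y) = a *: T x + T y) /\
  exists M : R, forall x, vnorm (T x) <= M * vnorm x.

Definition is_adjoint (T S : V -> V) : Prop :=
  forall x y, ip (T x) y = ip x (S y).

Variable I : choiceType.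
Variable e : I -> V.

Definition orthonormal_basis : Prop :=
  [/\ (forall i, ip (e i) (e i) = 1),
      (forall i j, i <> j -> ip (e i) (e j) = 0) &
      (forall x, (forall i, ip x (e i) = 0) -> x = 0)].

Definition hs_sum (T : V -> V) : \bar R :=
  (\esum_(i in [set: I]) ((vnorm (T (e i))) ^+ 2)%:E)%E.

Definition hilbert_schmidt (T : V -> V) : Prop :=
  bounded_linear T /\ (hs_sum T < +oo)%E.

Definition hs_norm (T : V -> V) : R := Num.sqrt (fine (hs_sum T)).

(* unordered sum of a (absolutely summable) complex family *)
Definition rsum (f : I -> R) : R :=
  fine (\esum_(i in [set: I]) (Num.max (f i) 0)%:E)%E -
  fine (\esum_(i in [set: I]) (Num.max (- f i) 0)%:E)%E.

Definition csum (f : I -> C) : C :=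
  (rsum (fun i => complex.Re (f i)) +i* rsum (fun i => complex.Im (f i)))%C.

Definition trace (T : V -> V) : C := csum (fun i => ip (T (e i)) (e i)).

(* Re(T) = (T + T^* )/2, for T with adjoint S *)
Definition re_op (T S : V -> V) : V -> V := fun x => 2^-1 *: (T x + S x).

Definition expi (t : R) : C := (cos t +i* sin t)%C.

(* w_(2,e)(B,C), where Bs, Cs are the adjoints of B, C:
   sup over |l1|^2+|l2|^2 <= 1 and real t of
   || Re(e^{it}(l1 B + l2 C)) ||_2 ,
   with (e^{it}(l1 B + l2 C))^* = conj(e^{it}) (conj l1 B^* + conj l2 C^* ). *)
Definition w2e (B Bs Cc Cs : V -> V) : R :=
  sup [set r : R | exists (l1 l2 : C) (t : R),
        ComplexField.Normc.normc l1 ^+ 2 + ComplexField.Normc.normc l2 ^+ 2 <= 1 /\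
        r = hs_norm (re_op
              (fun x => expi t *: (l1 *: B x + l2 *: Cc x))
              (fun x => conjc (expi t) *: (conjc l1 *: Bs x + conjc l2 *: Cs x)))].

End HilbertSchmidt.

(* Main.v *)
Require Import Defs.
From HB Require Import structures.
From mathcomp Require Import all_boot all_order all_algebra.
From mathcomp Require Import boolp classical_sets reals ereal esum trigo.
From mathcomp Require Import complex.
From mathcomp Require Import ring lra.
From mathcomp Require Import functions cardinality fsbigop.
Import Order.TTheory GRing.Theory Num.Theory.
Local Open Scope ring_scope.
Set Implicit Arguments. Unset Strict Implicit. Unset Printing Implicit Defensive.

Section Cx.
Variable R : realType.
Local Notation C := R[i].
Local Notation Re := complex.Re.
Local Notation Im := complex.Im.

Lemma ReM (a b : C) : Re (a * b) = Re a * Re b - Im a * Im b.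
Proof. by case: a => ? ?; case: b => ? ?. Qed.
Lemma ImM (a b : C) : Im (a * b) = Re a * Im b + Im a * Re b.
Proof. by case: a => ? ?; case: b => ? ?. Qed.
Lemma ReD (a b : C) : Re (a + b) = Re a + Re b.
Proof. by case: a => ? ?; case: b => ? ?. Qed.
Lemma ImD (a b : C) : Im (a + b) = Im a + Im b.
Proof. by case: a => ? ?; case: b => ? ?. Qed.
Lemma ReN (a : C) : Re (- a) = - Re a.
Proof. by case: a => ? ?. Qed.
Lemma ImN (a : C) : Im (- a) = - Im a.
Proof. by case: a => ? ?. Qed.
Lemma ReJ (a : C) : Re (conjc a) = Re a.
Proof. by case: a => ? ?. Qed.
Lemma ImJ (a : C) : Im (conjc a) = - Im a.
Proof. by case: a => ? ?. Qed.
Lemma ReC (r : R) : Re (r%:C)%C = r. Proof. by []. Qed.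
Lemma ImC (r : R) : Im (r%:C)%C = 0. Proof. by []. Qed.
Lemma cplx_eq (a b : C) : Re a = Re b -> Im a = Im b -> a = b.
Proof. by case: a => ? ?; case: b => ? ? /= -> ->. Qed.
Lemma conjM (a b : C) : conjc (a * b) = conjc a * conjc b.
Proof. by rewrite rmorphM. Qed.
Lemma conjD (a b : C) : conjc (a + b) = conjc a + conjc b.
Proof. by rewrite rmorphD. Qed.
Lemma conjK (a : C) : conjc (conjc a) = a.
Proof. exact: conjcK. Qed.

Definition n2 (a : C) : R := Re a ^+ 2 + Im a ^+ 2.
Lemma n2_ge0 a : 0 <= n2 a.
Proof. by rewrite /n2 addr_ge0 ?sqr_ge0. Qed.
Lemma n2E a : Re (a * conjc a) = n2 a.
Proof. rewrite ReM ReJ ImJ /n2; ring. Qed.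
Lemma n2M a b : n2 (a * b) = n2 a * n2 b.
Proof. rewrite /n2 ReM ImM; ring. Qed.
Lemma n2J a : n2 (conjc a) = n2 a.
Proof. by rewrite /n2 ReJ ImJ sqrrN. Qed.
Lemma normc_n2 a : ComplexField.Normc.normc a ^+ 2 = n2 a.
Proof. by case: a => x y; rewrite /= sqr_sqrtr // addr_ge0 ?sqr_ge0. Qed.
Lemma n2_eq0 a : n2 a = 0 -> a = 0.
Proof.
rewrite /n2 => /eqP; rewrite paddr_eq0 ?sqr_ge0 // !sqrf_eq0 => /andP[/eqP h1 /eqP h2].
by apply: cplx_eq; rewrite /= ?h1 ?h2.
Qed.
End Cx.

Lemma archi_inv (R : realType) (r : R) : 0 < r ->
  exists N : nat, forall n, (N <= n)%N -> (n.+1%:R)^-1 < r.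
Proof.
move=> r0; exists (Num.bound (r^-1)) => n hn.
have h1 : r^-1 < (Num.bound r^-1)%:R by apply: archi_boundP; rewrite invr_ge0 ltW.
have h2 : r^-1 < n.+1%:R.
  apply: (lt_le_trans h1); rewrite ler_nat; exact: leqW.
rewrite -[r]invrK ltf_pV2 // posrE ?invr_gt0 //.
Qed.

Lemma inv_anti (R : realType) (N n : nat) : (N <= n)%N -> (n.+1%:R)^-1 <= (N.+1%:R)^-1 :> R.
Proof. by move=> h; rewrite lef_pV2 ?posrE ?ltr0Sn // ler_nat ltnS. Qed.

Fixpoint tacc (T : eqType) (sq : nat -> seq T) (n : nat) : seq T :=
  match n with 0 => undup (sq 0%N) | m.+1 => undup (tacc sq m ++ sq m.+1) end.

Lemma tacc_uniq (T : eqType) sq n : uniq (@tacc T sq n).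
Proof. by case: n => [|n] /=; apply: undup_uniq. Qed.

Lemma tacc_sub1 (T : eqType) sq n : {subset sq n <= @tacc T sq n}.
Proof.
case: n => [|n] /= j; first by rewrite mem_undup.
by rewrite mem_undup mem_cat => ->; rewrite orbT.
Qed.

Lemma tacc_mono (T : eqType) sq n m : (n <= m)%N -> {subset @tacc T sq n <= tacc sq m}.
Proof.
elim: m => [|m IH]; first by rewrite leqn0 => /eqP ->.
rewrite leq_eqVlt => /orP[/eqP -> //|]; rewrite ltnS => /IH h j /h jm /=.
by rewrite mem_undup mem_cat jm.
Qed.

Section IP.
Variable R : realType.
Local Notation C := R[i].
Local Notation Re := complex.Re.
Local Notation Im := complex.Im.
Variable V : lmodType C.
Variable ip : V -> V -> C.
Hypothesis ipax : inner_product_axioms ip.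

Lemma ip_lin a x y z : ip (a *: x + y) z = a * ip x z + ip y z.
Proof. by have [h _ _ _] := ipax. Qed.
Lemma ip_sym x y : ip y x = conjc (ip x y).
Proof. by have [_ h _ _] := ipax. Qed.
Lemma ip_pos x : 0 <= ip x x.
Proof. by have [_ _ h _] := ipax. Qed.
Lemma ip_def x : ip x x = 0 -> x = 0.
Proof. by have [_ _ _ h] := ipax; apply: h. Qed.

Lemma ip0l z : ip 0 z = 0.
Proof.
have := ip_lin 1 0 0 z; rewrite scaler0 addr0 mul1r.
by rewrite -{1}[ip 0 z]addr0 => /addrI.
Qed.
Lemma ipDl x y z : ip (x + y) z = ip x z + ip y z.
Proof. by rewrite -[x]scale1r ip_lin mul1r scale1r. Qed.
Lemma ipZl a x z : ip (a *: x) z = a * ip x z.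
Proof. by rewrite -[a *: x]addr0 ip_lin ip0l addr0. Qed.
Lemma ipNl x z : ip (- x) z = - ip x z.
Proof. by rewrite -scaleN1r ipZl mulN1r. Qed.
Lemma ipBl x y z : ip (x - y) z = ip x z - ip y z.
Proof. by rewrite ipDl ipNl. Qed.
Lemma ipDr x y z : ip z (x + y) = ip z x + ip z y.
Proof. by rewrite ip_sym ipDl conjD -!ip_sym. Qed.
Lemma ipZr a x z : ip z (a *: x) = conjc a * ip z x.
Proof. by rewrite ip_sym ipZl conjM -ip_sym. Qed.
Lemma ipNr x z : ip z (- x) = - ip z x.
Proof. by rewrite -scaleN1r ipZr rmorphN1 mulN1r. Qed.
Lemma ipBr x y z : ip z (x - y) = ip z x - ip z y.
Proof. by rewrite ipDr ipNr. Qed.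
Lemma ip0r z : ip z 0 = 0.
Proof. by rewrite ip_sym ip0l rmorph0. Qed.
Lemma ipsum_l (J : Type) (s : seq J) (f : J -> V) z :
  ip (\sum_(j <- s) f j) z = \sum_(j <- s) ip (f j) z.
Proof.
elim: s => [|a s IH]; first by rewrite !big_nil ip0l.
by rewrite !big_cons ipDl IH.
Qed.
Lemma ipsum_r (J : Type) (s : seq J) (f : J -> V) z :
  ip z (\sum_(j <- s) f j) = \sum_(j <- s) ip z (f j).
Proof.
elim: s => [|a s IH]; first by rewrite !big_nil ip0r.
by rewrite !big_cons ipDr IH.
Qed.

Definition q x := Re (ip x x).
Lemma ImIP x : Im (ip x x) = 0.
Proof. by apply: ger0_Im; apply: ip_pos. Qed.
Lemma q_ge0 x : 0 <= q x.
Proof. by have := ip_pos x; rewrite lecE => /andP[_ h]; exact: h. Qed.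
Lemma ipxx x : ip x x = (q x)%:C%C.
Proof. by apply: cplx_eq => //=; rewrite ImIP. Qed.
Lemma ReIPsym x y : Re (ip y x) = Re (ip x y).
Proof. by rewrite ip_sym ReJ. Qed.
Lemma ImIPsym x y : Im (ip y x) = - Im (ip x y).
Proof. by rewrite ip_sym ImJ. Qed.
Lemma qD x y : q (x + y) = q x + q y + 2 * Re (ip x y).
Proof. rewrite /q ipDl !ipDr !ReD (ReIPsym x y); ring. Qed.
Lemma qN x : q (- x) = q x.
Proof. by rewrite /q ipNl ipNr opprK. Qed.
Lemma qB x y : q (x - y) = q x + q y - 2 * Re (ip x y).
Proof. rewrite qD qN ipNr ReN; ring. Qed.
Lemma qZ a x : q (a *: x) = n2 a * q x.
Proof.
rewrite /q ipZl ipZr mulrA ipxx ReM ImC mulr0 subr0 /=.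
by rewrite mulrC -n2E mulrC.
Qed.
Lemma q0 : q 0 = 0.
Proof. by rewrite /q ip0l. Qed.
Lemma q_eq0 x : q x = 0 -> x = 0.
Proof. by move=> h; apply: ip_def; rewrite ipxx h. Qed.

Lemma ReIP_le x y : 2 * `|Re (ip x y)| <= q x + q y.
Proof.
have h1 := q_ge0 (x + y); have h2 := q_ge0 (x - y).
rewrite qD in h1; rewrite qB in h2.
have [r0|r0] := leP 0 (Re (ip x y)).
  by rewrite ger0_norm //; lra.
by rewrite ltr0_norm //; lra.
Qed.
Lemma ImIP_Re x y : Im (ip x y) = Re (ip x ('i%C *: y)).
Proof. by rewrite ipZr ReM /=; ring. Qed.
Lemma ImIP_le x y : 2 * `|Im (ip x y)| <= q x + q y.
Proof.
rewrite ImIP_Re; apply: (le_trans (ReIP_le _ _)).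
by rewrite qZ /n2 /= expr0n expr1n /= add0r mul1r.
Qed.
Lemma q_le2 x y : q (x + y) <= 2 * q x + 2 * q y.
Proof.
have h1 := q_ge0 (x - y); rewrite qB in h1; rewrite qD; lra.
Qed.
Lemma n2IP_le x y : n2 (ip x y) <= q x * q y.
Proof.
have [y0|yn0] := eqVneq (q y) 0.
  by rewrite y0 mulr0 (q_eq0 y0) ip0r /n2 /= expr0n /= addr0.
have ypos : 0 < q y by rewrite lt_neqAle eq_sym yn0 q_ge0.
set c := ip x y.
have := q_ge0 ((q y)%:C%C *: x - c *: y).
rewrite qB !qZ ipZl ipZr.
have -> : n2 (q y)%:C%C = q y ^+ 2 by rewrite /n2 /= expr0n /= addr0.
rewrite mulrA ReM /=.
rewrite ReM ImM ReJ ImJ /= !mul0r !subr0 !addr0 -/c.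
move=> h.

have : 0 <= q y * (q y * q x - n2 c).
  by move: h; rewrite /n2; congr (_ <= _); ring.
by rewrite pmulr_rge0 // subr_ge0 [q y * _]mulrC.
Qed.
End IP.

Section Sums.
Variable R : realType.
Variable I : choiceType.
Implicit Types f g : I -> R.
Local Open Scope classical_set_scope.

Lemma mx_pos (x : R) : 0 <= x -> Num.max x 0 = x.
Proof. by move=> h; rewrite max_l. Qed.
Lemma mx_neg (x : R) : x <= 0 -> Num.max x 0 = 0.
Proof. by move=> h; rewrite max_r. Qed.
Lemma mx_split (x : R) : Num.max x 0 - Num.max (- x) 0 = x.
Proof.
have [h|h] := leP 0 x.
  rewrite (@mx_neg (- x)) ?subr0 // oppr_le0 //.
rewrite (@mx_pos (- x)) ?sub0r ?opprK // oppr_ge0 ltW //.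
Qed.

Definition Es f : \bar R := (\esum_(i in [set: I]) (f i)%:E)%E.
Definition S f : R := fine (Es f).
Definition fin f : Prop := (Es f < +oo)%E.
Definition sm f : Prop := fin (fun i => `|f i|).

Lemma Es_ge0 f : (forall i, 0 <= f i) -> (0 <= Es f)%E.
Proof. by move=> h; apply: esum_ge0 => i _; rewrite lee_fin. Qed.

Lemma EsE f : (forall i, 0 <= f i) -> fin f -> Es f = (S f)%:E.
Proof.
move=> h0 hf; rewrite /S fineK //; rewrite ge0_fin_numE //; exact: Es_ge0.
Qed.

Lemma S_ge0 f : (forall i, 0 <= f i) -> 0 <= S f.
Proof. by move=> h; rewrite /S fine_ge0 // Es_ge0. Qed.

Lemma Es_le f g : (forall i, f i <= g i) -> (Es f <= Es g)%E.
Proof. by move=> h; apply: le_esum => i _; rewrite lee_fin. Qed.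

Lemma fin_le f g : (forall i, f i <= g i) -> fin g -> fin f.
Proof. by move=> h; rewrite /fin; apply: le_lt_trans; apply: Es_le. Qed.

Lemma S_le f g : (forall i, 0 <= f i) -> (forall i, f i <= g i) -> fin g -> S f <= S g.
Proof.
move=> h0 h hg.
have g0 : forall i, 0 <= g i by move=> i; apply: le_trans (h i).
have hf := fin_le h hg.
by rewrite -lee_fin -!EsE //; apply: Es_le.
Qed.

Lemma EsD f g : (forall i, 0 <= f i) -> (forall i, 0 <= g i) ->
  Es (fun i => f i + g i) = (Es f + Es g)%E.
Proof.
move=> hf hg; rewrite /Es -esumD.
- by apply: eq_esum => i _; rewrite EFinD.
- by move=> i _; rewrite lee_fin.
- by move=> i _; rewrite lee_fin.
Qed.

Lemma finD f g : (forall i, 0 <= f i) -> (forall i, 0 <= g i) ->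
  fin f -> fin g -> fin (fun i => f i + g i).
Proof.
move=> h0 g0 hf hg; rewrite /fin EsD // (EsE h0 hf) (EsE g0 hg) -EFinD.
exact: ltry.
Qed.

Lemma SD f g : (forall i, 0 <= f i) -> (forall i, 0 <= g i) ->
  fin f -> fin g -> S (fun i => f i + g i) = S f + S g.
Proof.
move=> h0 g0 hf hg; rewrite {1}/S EsD // (EsE h0 hf) (EsE g0 hg) -EFinD.
by [].
Qed.

Lemma EsZ c f : 0 <= c -> (forall i, 0 <= f i) ->
  Es (fun i => c * f i) = (c%:E * Es f)%E.
Proof.
move=> c0 h0; rewrite /Es /esum -ereal_supZl //; last first.
  by apply/set0P; exists 0%E; exists set0; [exact: fsets_set0|rewrite fsbig_set0].
congr ereal_sup; apply/seteqP; split => x /=.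
  move=> [A [finA _] <-]; exists (\sum_(i \in A) (f i)%:E)%E.
    by exists A.
  by rewrite !fsumEFin // -EFinM !fsbig_finite //= mulr_sumr.
move=> [y [A [finA HA] <-] <-]; exists A => //.
by rewrite !fsumEFin // -EFinM !fsbig_finite //= mulr_sumr.
Qed.

Lemma finZ c f : 0 <= c -> (forall i, 0 <= f i) -> fin f -> fin (fun i => c * f i).
Proof.
by move=> c0 h0 hf; rewrite /fin EsZ // (EsE h0 hf) -EFinM ltry.
Qed.

Lemma SZ c f : 0 <= c -> (forall i, 0 <= f i) -> fin f -> S (fun i => c * f i) = c * S f.
Proof.
by move=> c0 h0 hf; rewrite {1}/S EsZ // (EsE h0 hf) -EFinM.
Qed.

Lemma S0 : S (fun _ => 0) = 0.
Proof. by rewrite /S /Es esum1. Qed.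
Lemma fin0 : fin (fun _ => 0).
Proof. by rewrite /fin /Es esum1. Qed.

Lemma rsumE f : rsum f = S (fun i => Num.max (f i) 0) - S (fun i => Num.max (- f i) 0).
Proof. by []. Qed.

Lemma rsum_decomp (a b : I -> R) : (forall i, 0 <= a i) -> (forall i, 0 <= b i) ->
  fin a -> fin b -> rsum (fun i => a i - b i) = S a - S b.
Proof.
move=> a0 b0 ha hb; rewrite rsumE.
set p := (fun i => _); set n := (fun i => _).
have p0 : forall i, 0 <= p i by move=> i; rewrite /p le_max lexx orbT.
have n0 : forall i, 0 <= n i by move=> i; rewrite /n le_max lexx orbT.
have hp : fin p.
  apply: fin_le ha => i; rewrite /p ge_max a0 andbT; have := b0 i; lra.
have hn : fin n.
  apply: fin_le hb => i; rewrite /n ge_max b0 andbT; have := a0 i; lra.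
have e : (fun i => p i + b i) = (fun i => n i + a i).
  apply/funext => i; rewrite /p /n /=.
  have := mx_split (a i - b i); lra.
have := SD p0 b0 hp hb; rewrite e SD // => h.
have : S p - S n = S a - S b by lra.
by [].
Qed.

Lemma rsum_ge0 f : (forall i, 0 <= f i) -> fin f -> rsum f = S f.
Proof.
move=> f0 hf; have := rsum_decomp f0 (fun i => lexx 0) hf fin0.
rewrite S0 subr0 => <-; congr rsum; apply/funext => i; by rewrite subr0.
Qed.

Lemma sm_pos f : sm f -> fin (fun i => Num.max (f i) 0).
Proof.
move=> h; apply: fin_le h => i; rewrite ge_max normr_ge0 andbT; exact: ler_norm.
Qed.
Lemma sm_neg f : sm f -> fin (fun i => Num.max (- f i) 0).
Proof.
move=> h; apply: fin_le h => i; rewrite ge_max normr_ge0 andbT -normrN; exact: ler_norm.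
Qed.

Lemma sm_le f g : (forall i, `|f i| <= g i) -> fin g -> sm f.
Proof. by move=> h hg; apply: fin_le hg. Qed.

Lemma sm_ge0 f : (forall i, 0 <= f i) -> fin f -> sm f.
Proof. by move=> h hf; apply: sm_le hf => i; rewrite ger0_norm. Qed.

Lemma smD f g : sm f -> sm g -> sm (fun i => f i + g i).
Proof.
move=> hf hg; apply: sm_le (finD _ _ hf hg) => //= i; first exact: ler_normD.
Qed.

Lemma smZ c f : sm f -> sm (fun i => c * f i).
Proof.
move=> hf; apply: sm_le (finZ (normr_ge0 c) _ hf) => //= i.
by rewrite normrM.
Qed.

Lemma smN f : sm f -> sm (fun i => - f i).
Proof. by move=> hf; apply: sm_le hf => i; rewrite normrN. Qed.

Lemma rsum_sm f : sm f -> rsum f = rsum (fun i => Num.max (f i) 0 - Num.max (- f i) 0).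
Proof.
move=> _; congr rsum; apply/funext => i.
by rewrite mx_split.
Qed.

Lemma rsumN f : rsum (fun i => - f i) = - rsum f.
Proof.
rewrite !rsumE opprB; congr (_ - _).
by congr S; apply/funext => i; rewrite opprK.
Qed.

Lemma max0_ge0 (x : R) : 0 <= Num.max x 0.
Proof. by rewrite le_max lexx orbT. Qed.

Lemma rsumD f g : sm f -> sm g -> rsum (fun i => f i + g i) = rsum f + rsum g.
Proof.
move=> hf hg.
have e : (fun i => f i + g i) = (fun i =>
   (Num.max (f i) 0 + Num.max (g i) 0) - (Num.max (- f i) 0 + Num.max (- g i) 0)).
  apply/funext => i.
  rewrite opprD addrACA !mx_split; ring.
rewrite e rsum_decomp; first last.
- exact: finD (fun i => max0_ge0 _) (fun i => max0_ge0 _) (sm_neg hf) (sm_neg hg).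
- exact: finD (fun i => max0_ge0 _) (fun i => max0_ge0 _) (sm_pos hf) (sm_pos hg).
- by move=> i; apply: addr_ge0; apply: max0_ge0.
- by move=> i; apply: addr_ge0; apply: max0_ge0.
rewrite !SD; try exact: max0_ge0; try exact: sm_pos; try exact: sm_neg.
rewrite !rsumE; ring.
all: by move=> i; apply: max0_ge0.
Qed.

Lemma rsumZ c f : sm f -> rsum (fun i => c * f i) = c * rsum f.
Proof.
move=> hf.
wlog c0 : c / 0 <= c.
  move=> W; have [h|h] := leP 0 c; first exact: W.
  have := W (- c); rewrite oppr_ge0 => /(_ (ltW h)).
  have -> : (fun i => - c * f i) = (fun i => - (c * f i)).
    by apply/funext => i; rewrite mulNr.
  by rewrite rsumN mulNr => /eqP; rewrite eqr_opp => /eqP.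
have e : (fun i => c * f i) = (fun i =>
   c * Num.max (f i) 0 - c * Num.max (- f i) 0).
  apply/funext => i; by rewrite -mulrBr mx_split.
rewrite e rsum_decomp; first last.
- exact: finZ c0 (fun i => max0_ge0 _) (sm_neg hf).
- exact: finZ c0 (fun i => max0_ge0 _) (sm_pos hf).
- by move=> i; apply: mulr_ge0 => //; apply: max0_ge0.
- by move=> i; apply: mulr_ge0 => //; apply: max0_ge0.
rewrite !SZ //; try exact: max0_ge0; try exact: sm_pos; try exact: sm_neg.
rewrite rsumE; ring.
all: by move=> i; apply: max0_ge0.
Qed.

Lemma rsum_ext f g : (forall i, f i = g i) -> rsum f = rsum g.
Proof. by move=> h; congr rsum; apply/funext. Qed.

End Sums.

Section CSums.
Variable R : realType.
Local Notation C := R[i].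
Local Notation Re := complex.Re.
Local Notation Im := complex.Im.
Variable I : choiceType.
Implicit Types f g : I -> C.

Definition csm f := sm (fun i => Re (f i)) /\ sm (fun i => Im (f i)).

Lemma Re_csum f : Re (csum f) = rsum (fun i => Re (f i)). Proof. by []. Qed.
Lemma Im_csum f : Im (csum f) = rsum (fun i => Im (f i)). Proof. by []. Qed.

Lemma csumD f g : csm f -> csm g -> csum (fun i => f i + g i) = csum f + csum g.
Proof.
move=> [hf1 hf2] [hg1 hg2]; apply: cplx_eq; rewrite ?ReD ?ImD ?Re_csum ?Im_csum.
  rewrite -rsumD //; apply: rsum_ext => i; exact: ReD.
rewrite -rsumD //; apply: rsum_ext => i; exact: ImD.
Qed.

Lemma csumZ a f : csm f -> csum (fun i => a * f i) = a * csum f.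
Proof.
move=> [hf1 hf2]; apply: cplx_eq; rewrite ?ReM ?ImM ?Re_csum ?Im_csum.
  rewrite -!rsumZ // -rsumN -rsumD; try by [apply: smZ|apply: smN; apply: smZ].
  by apply: rsum_ext => i; rewrite ReM.
rewrite -!rsumZ // -rsumD; try by apply: smZ.
by apply: rsum_ext => i; rewrite ImM.
Qed.

Lemma csumJ f : csum (fun i => conjc (f i)) = conjc (csum f).
Proof.
apply: cplx_eq; rewrite ?ReJ ?ImJ ?Re_csum ?Im_csum //.
  by apply: rsum_ext => i; exact: ReJ.
rewrite -rsumN; apply: rsum_ext => i; exact: ImJ.
Qed.

Lemma csmD f g : csm f -> csm g -> csm (fun i => f i + g i).
Proof.
move=> [hf1 hf2] [hg1 hg2]; split.
  by rewrite (_ : (fun i => _) = (fun i => Re (f i) + Re (g i))); [apply: smD|apply/funext => i; rewrite ReD].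
by rewrite (_ : (fun i => _) = (fun i => Im (f i) + Im (g i))); [apply: smD|apply/funext => i; rewrite ImD].
Qed.

Lemma csmZ a f : csm f -> csm (fun i => a * f i).
Proof.
move=> [hf1 hf2]; split.
  rewrite (_ : (fun i => _) = (fun i => Re a * Re (f i) + - (Im a * Im (f i)))).
    by apply: smD; [apply: smZ|apply: smN; apply: smZ].
  by apply/funext => i; rewrite ReM.
rewrite (_ : (fun i => _) = (fun i => Re a * Im (f i) + Im a * Re (f i))).
  by apply: smD; apply: smZ.
by apply/funext => i; rewrite ImM.
Qed.

Lemma csum_real (a : I -> R) : (forall i, 0 <= a i) -> fin a ->
  csum (fun i => (a i)%:C%C) = (S a)%:C%C.
Proof.
move=> a0 ha; apply: cplx_eq; rewrite ?Re_csum ?Im_csum /=.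
  exact: rsum_ge0.
rewrite (rsum_ext (g := fun _ => 0)) // rsum_ge0 ?S0 //; exact: fin0.
Qed.

End CSums.

Lemma ReSum (R : realType) (J : Type) (s : seq J) (F : J -> R[i]) :
  complex.Re (\sum_(j <- s) F j) = \sum_(j <- s) complex.Re (F j).
Proof.
elim: s => [|a s IH]; first by rewrite !big_nil.
by rewrite !big_cons ReD IH.
Qed.

Lemma sum_delta (T : eqType) (U : zmodType) (F : T -> U) (s : seq T) (k : T) :
  uniq s -> \sum_(j <- s) (if j == k then F j else 0) = if k \in s then F k else 0.
Proof.
elim: s => [|a s IH]; first by rewrite big_nil.
rewrite big_cons /= => /andP[an us]; rewrite IH // in_cons.
have [ak|ak] := eqVneq a k.
  by rewrite -ak /= (negPf an) addr0.
by rewrite /= add0r.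
Qed.

Section Parseval.
Variable R : realType.
Local Notation C := R[i].
Local Notation Re := complex.Re.
Local Notation Im := complex.Im.
Variable V : lmodType C.
Variable ip : V -> V -> C.
Hypothesis ipax : inner_product_axioms ip.
Hypothesis hcomp : complete_space ip.
Variable I : choiceType.
Variable e : I -> V.
Hypothesis onb : orthonormal_basis ip e.
Local Notation qn := (q ip).

Lemma e_unit k : ip (e k) (e k) = 1.
Proof. by have [h _ _] := onb. Qed.
Lemma e_orth j k : j <> k -> ip (e j) (e k) = 0.
Proof. by have [_ h _] := onb; apply: h. Qed.
Lemma e_total x : (forall k, ip x (e k) = 0) -> x = 0.
Proof. by have [_ _ h] := onb; apply: h. Qed.
Lemma q_e k : qn (e k) = 1.
Proof. by rewrite /q e_unit. Qed.

Definition cf x j := ip x (e j).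
Definition proj x (s : seq I) : V := \sum_(j <- s) cf x j *: e j.
Definition pp x (s : seq I) : R := \sum_(j <- s) n2 (cf x j).

Lemma ip_proj_e x s k : uniq s -> ip (proj x s) (e k) = if k \in s then cf x k else 0.
Proof.
move=> us; rewrite /proj ipsum_l // -(sum_delta (cf x) k us).
apply: eq_bigr => j _; rewrite ipZl //.
have [->|jk] := eqVneq j k; first by rewrite e_unit mulr1.
by rewrite e_orth ?mulr0 //; apply/eqP.
Qed.

Lemma ip_orth_proj x z s : (forall j, j \in s -> ip z (e j) = 0) -> ip z (proj x s) = 0.
Proof.
move=> h; rewrite /proj ipsum_r // big_seq big1 // => j js.
by rewrite ipZr // h // mulr0.
Qed.

Lemma pp_ge0 x s : 0 <= pp x s.
Proof. by rewrite /pp sumr_ge0 // => j _; apply: n2_ge0. Qed.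

Lemma q_x_proj x s : uniq s -> qn (x - proj x s) = qn x - pp x s.
Proof.
move=> us; rewrite qB //.
have h1 : Re (ip x (proj x s)) = pp x s.
  rewrite /proj ipsum_r // ReSum /pp; apply: eq_bigr => j _.
  by rewrite ipZr // -/(cf x j) mulrC n2E.
have h2 : qn (proj x s) = pp x s.
  rewrite /q {1}/proj ipsum_l // ReSum /pp big_seq [RHS]big_seq.
  apply: eq_bigr => j js.
  by rewrite ipZl // (ip_sym ipax) ip_proj_e // js n2E.
rewrite h1 h2; ring.
Qed.

Lemma bessel x s : uniq s -> pp x s <= qn x.
Proof.
move=> us; have := q_ge0 ipax (x - proj x s); rewrite q_x_proj //; lra.
Qed.

Lemma pp_sub x s t : uniq s -> uniq t -> {subset s <= t} ->
  qn (proj x t - proj x s) = pp x t - pp x s.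
Proof.
move=> us ut st.
have o : ip (x - proj x t) (proj x t - proj x s) = 0.
  rewrite ipBr // !(ip_orth_proj x) ?subrr // => j js;
    rewrite ipBl // ip_proj_e // ?(st _ js) ?js /cf subrr //.
have := q_x_proj x us.
have -> : x - proj x s = (x - proj x t) + (proj x t - proj x s) by rewrite addrA subrK.
rewrite qD // o q_x_proj //= => h; lra.
Qed.

Lemma pp_mono x s t : uniq s -> uniq t -> {subset s <= t} -> pp x s <= pp x t.
Proof.
move=> us ut st; have := q_ge0 ipax (proj x t - proj x s); rewrite pp_sub //; lra.
Qed.


Local Open Scope classical_set_scope.

Lemma es_le x : (Es (fun j => n2 (cf x j)) <= (qn x)%:E)%E.
Proof.
rewrite /Es /esum; apply: ge_ereal_sup => _ [A [finA _] <-].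
rewrite fsumEFin // lee_fin fsbig_finite //; apply: bessel => //.
Qed.

Lemma pp_le_Es x s : uniq s -> ((pp x s)%:E <= Es (fun j => n2 (cf x j)))%E.
Proof.
move=> us; apply: esum_ge; exists [set` s]; first by split => //; exact: finite_seq.
by rewrite fsumEFin ?finite_seq // -fsbig_seq.
Qed.

Lemma parseval x : Es (fun j => n2 (cf x j)) = (qn x)%:E.
Proof.
have finE : fin (fun j => n2 (cf x j)) := le_lt_trans (es_le x) (ltry _).
have E0 := EsE (fun j => n2_ge0 _) finE.
set Sx := S (fun j => n2 (cf x j)) in E0.
rewrite E0; apply/eqP; rewrite eq_le; apply/andP; split; first by rewrite -E0 es_le.
rewrite lee_fin.
have pub : forall s, uniq s -> pp x s <= Sx.
  by move=> s us; rewrite -lee_fin -E0 pp_le_Es.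
have gt : forall n : nat, exists s, uniq s /\ Sx - (n.+1%:R)^-1 < pp x s.
  move=> n.
  have : ((Sx - (n.+1%:R)^-1)%:E < Es (fun j => n2 (cf x j)))%E.
    by rewrite E0 lte_fin ltrBlDr ltrDl invr_gt0 ltr0Sn.
  rewrite /Es /esum => /ereal_sup_gt [_ [A [finA _] <-]].
  rewrite fsumEFin // lte_fin fsbig_finite // => h.
  by exists (finmap.enum_fset (fset_set A)); split => //; exact: fset_uniq.
have [sq hsq] := choice gt.
pose t := tacc sq.
have ppt : forall n, Sx - (n.+1%:R)^-1 < pp x (t n).
  move=> n; have [us h] := hsq n; apply: (lt_le_trans h).
  by apply: pp_mono => //; [exact: tacc_uniq|exact: tacc_sub1].
pose y := fun n => proj x (t n).
have qdiff : forall n m, (n <= m)%N -> qn (y m - y n) < (n.+1%:R)^-1.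
  move=> n m nm; rewrite /y pp_sub //; try exact: tacc_uniq; last exact: tacc_mono.
  have := pub _ (tacc_uniq sq m); have := ppt n; rewrite /t.
  move: (pp x (tacc sq m)) (pp x (tacc sq n)) (n.+1%:R^-1) => a b r; lra.
have vq : forall z, vnorm ip z = Num.sqrt (qn z) by [].
have hc : cauchy_seq ip y.
  move=> eps ep.
  have [N hN] := archi_inv (exprn_gt0 2 ep).
  exists N => m n hm hn.
  rewrite vq -[eps]ger0_norm ?ltW // -sqrtr_sqr ltr_sqrt ?exprn_gt0 //.
  have [nm|mn] := leqP n m.
    by apply: lt_le_trans (qdiff _ _ nm) _; apply: ltW; apply: hN.
  rewrite -qN // opprB.
  by apply: lt_le_trans (qdiff _ _ (ltnW mn)) _; apply: ltW; apply: hN.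
have [l hl] := hcomp hc.
have hl' : forall eps, 0 < eps -> exists N, forall n, (N <= n)%N -> qn (y n - l) < eps.
  move=> eps ep; have ep' : 0 < Num.sqrt eps by rewrite sqrtr_gt0.
  have [N hN] := hl _ ep'.
  by exists N => n /hN; rewrite vq ltr_sqrt.
have yk : forall k n, ip (y n) (e k) = if k \in t n then cf x k else 0.
  by move=> k n; rewrite /y ip_proj_e //; exact: tacc_uniq.
have orth : forall k, ip (x - l) (e k) = 0.
  move=> k; set d := ip (x - l) (e k).
  have key : forall eps, 0 < eps -> n2 d < eps.
    move=> eps ep.
    have [N1 hN1] : exists N1, forall n, (N1 <= n)%N -> ip (x - y n) (e k) = 0.
      have [ck|ck] := eqVneq (cf x k) 0.
        exists 0%N => n _; rewrite ipBl // yk -/(cf x k) ck.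
        by case: (k \in t n); rewrite subrr.
      have ck0 : 0 < n2 (cf x k).
        rewrite lt_neqAle n2_ge0 andbT eq_sym; apply/eqP => /n2_eq0 h.
        by rewrite h eqxx in ck.
      have [N hN] := archi_inv ck0.
      exists N => n hn; rewrite ipBl // yk.
      case kt: (k \in t n); first by rewrite subrr.
      exfalso.
      have ukt : uniq (k :: t n) by rewrite /= kt tacc_uniq.
      have := pub _ ukt; rewrite /pp big_cons -/(pp x (t n)).
      have := ppt n; have := hN _ hn; rewrite /t.
      move: (pp x (tacc sq n)) (n.+1%:R^-1) (n2 (cf x k)) => a r b; lra.
    have [N2 hN2] := hl' _ ep.
    pose n := maxn N1 N2.
    have -> : d = ip (y n - l) (e k).
      rewrite /d; have -> : x - l = (x - y n) + (y n - l) by rewrite addrA subrK.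
      rewrite ipDl //.
      by rewrite hN1 ?leq_maxl // add0r.
    apply: le_lt_trans (n2IP_le ipax _ _) _.
    by rewrite q_e mulr1; apply: hN2; rewrite leq_maxr.
  have h0 := n2_ge0 d; rewrite le_eqVlt in h0; case/orP: h0 => [/eqP h|h].
    by apply: n2_eq0; rewrite -h.
  by have := key _ h; rewrite ltxx.
have xl : x = l.
  by apply/eqP; rewrite -subr_eq0; apply/eqP; apply: e_total.
rewrite leNgt; apply/negP => h.
have ep : 0 < qn x - Sx by rewrite subr_gt0.
have [N hN] := hl' _ ep.
have := hN _ (leqnn N).
rewrite -qN // opprB -xl /y q_x_proj ?tacc_uniq //.
have := pub _ (tacc_uniq sq N); rewrite /t.
move: (pp x (tacc sq N)) => a; lra.
Qed.


Definition hq (X : V -> V) i := qn (X (e i)).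

Lemma hq_ge0 X i : 0 <= hq X i.
Proof. exact: q_ge0. Qed.

Lemma hs_adj X Xs : is_adjoint ip X Xs -> Es (hq X) = Es (hq Xs).
Proof.
move=> adj; rewrite /Es.
transitivity (\esum_(i in [set: I]) \esum_(j in [set: I]) (n2 (ip (X (e i)) (e j)))%:E)%E.
  by apply: eq_esum => i _; rewrite /hq -parseval.
transitivity (\esum_(j in [set: I]) \esum_(i in [set: I]) (n2 (ip (Xs (e j)) (e i)))%:E)%E; last first.
  by apply: eq_esum => i _; rewrite /hq -parseval.
rewrite !esum_esum; try by move=> *; rewrite lee_fin n2_ge0.
have ST : [set: I] `*`` (fun _ => [set: I]) = [set: I * I].
  by apply/seteqP; split.
rewrite ST (@reindex_esum _ _ _ [set: I * I] [set: I * I] (fun k : I * I => (k.2, k.1))) /=.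
  apply: eq_esum => -[i j] _ /=.
  by rewrite adj (ip_sym ipax) n2J.
rewrite setTT_bijective; by exists (fun k : I * I => (k.2, k.1)) => -[].
Qed.

Definition hsfin X := fin (hq X).

Lemma hsfin_adj X Xs : is_adjoint ip X Xs -> hsfin X -> hsfin Xs.
Proof. by move=> h; rewrite /hsfin /fin (hs_adj h). Qed.

Lemma S_adj X Xs : is_adjoint ip X Xs -> S (hq X) = S (hq Xs).
Proof. by move=> h; rewrite /S (hs_adj h). Qed.

Lemma adj_sym X Xs : is_adjoint ip X Xs -> is_adjoint ip Xs X.
Proof.
move=> h x y; rewrite (ip_sym ipax) -h -(ip_sym ipax) //.
Qed.

Lemma adj_add X Xs Y Ys : is_adjoint ip X Xs -> is_adjoint ip Y Ys ->
  is_adjoint ip (fun x => X x + Y x) (fun x => Xs x + Ys x).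
Proof. by move=> h1 h2 x y; rewrite ipDl // ipDr // h1 h2. Qed.

Lemma adj_sub X Xs Y Ys : is_adjoint ip X Xs -> is_adjoint ip Y Ys ->
  is_adjoint ip (fun x => X x - Y x) (fun x => Xs x - Ys x).
Proof. by move=> h1 h2 x y; rewrite ipBl // ipBr // h1 h2. Qed.

Lemma adj_scale a X Xs : is_adjoint ip X Xs ->
  is_adjoint ip (fun x => a *: X x) (fun x => conjc a *: Xs x).
Proof. by move=> h x y; rewrite ipZl // ipZr // conjK h. Qed.

Lemma hsfin_add X Y : hsfin X -> hsfin Y -> hsfin (fun x => X x + Y x).
Proof.
move=> hX hY.
have h := finD (fun i => hq_ge0 X i) (fun i => hq_ge0 Y i) hX hY.
have h2 := finZ (ler0n _ 2) (fun i => addr_ge0 (hq_ge0 X i) (hq_ge0 Y i)) h.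
apply: fin_le h2 => i; rewrite /hq mulrDr; exact: q_le2.
Qed.

Lemma hsfin_sub X Y : hsfin X -> hsfin Y -> hsfin (fun x => X x - Y x).
Proof.
move=> hX hY; have := hsfin_add hX (_ : hsfin (fun x => - Y x)).
  by apply; apply: fin_le hY => i; rewrite /hq qN.
Qed.

Lemma hsfin_scale a X : hsfin X -> hsfin (fun x => a *: X x).
Proof.
move=> hX; have := finZ (n2_ge0 a) (fun i => hq_ge0 X i) hX.
by apply: fin_le => i; rewrite /hq qZ.
Qed.

Lemma sm_Re X Y : hsfin X -> hsfin Y -> sm (fun i => Re (ip (X (e i)) (Y (e i)))).
Proof.
move=> hX hY; apply: sm_le (finD (fun i => hq_ge0 X i) (fun i => hq_ge0 Y i) hX hY) => i.
have := ReIP_le ipax (X (e i)) (Y (e i)); have := normr_ge0 (Re (ip (X (e i)) (Y (e i)))).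
rewrite /hq; move: (`|_|) (qn (X (e i))) (qn (Y (e i))) => a b c; lra.
Qed.

Lemma sm_Im X Y : hsfin X -> hsfin Y -> sm (fun i => Im (ip (X (e i)) (Y (e i)))).
Proof.
move=> hX hY; apply: sm_le (finD (fun i => hq_ge0 X i) (fun i => hq_ge0 Y i) hX hY) => i.
have := ImIP_le ipax (X (e i)) (Y (e i)); have := normr_ge0 (Im (ip (X (e i)) (Y (e i)))).
rewrite /hq; move: (`|_|) (qn (X (e i))) (qn (Y (e i))) => a b c; lra.
Qed.

Lemma sm_hq X : hsfin X -> sm (hq X).
Proof. by move=> h; apply: sm_ge0 h => i; apply: hq_ge0. Qed.

Lemma rsum_hq X : hsfin X -> rsum (hq X) = S (hq X).
Proof. by move=> h; apply: rsum_ge0 h => i; apply: hq_ge0. Qed.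

Lemma rsumRe_form X Y : hsfin X -> hsfin Y ->
  rsum (fun i => Re (ip (X (e i)) (Y (e i)))) =
  4^-1 * (S (hq (fun x => X x + Y x)) - S (hq (fun x => X x - Y x))).
Proof.
move=> hX hY.
have hp := hsfin_add hX hY; have hm := hsfin_sub hX hY.
rewrite -rsum_decomp; try exact: hq_ge0; try done.
rewrite -rsumZ; last by apply: smD; [exact: sm_hq|apply: smN; exact: sm_hq].
apply: rsum_ext => i; rewrite /hq qD // qB //; by field.
Qed.

Lemma RePsym X Xs Y Ys : is_adjoint ip X Xs -> is_adjoint ip Y Ys ->
  hsfin X -> hsfin Y ->
  rsum (fun i => Re (ip (X (e i)) (Y (e i)))) = rsum (fun i => Re (ip (Ys (e i)) (Xs (e i)))).
Proof.
move=> aX aY hX hY.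
have hXs := hsfin_adj aX hX; have hYs := hsfin_adj aY hY.
rewrite !rsumRe_form //.
rewrite (S_adj (adj_add aX aY)) (S_adj (adj_sub aX aY)).
have -> : hq (fun x => Xs x + Ys x) = hq (fun x => Ys x + Xs x).
  by apply/funext => i; rewrite /hq addrC.
have -> : hq (fun x => Xs x - Ys x) = hq (fun x => Ys x - Xs x).
  by apply/funext => i; rewrite /hq -qN // opprB.
by [].
Qed.

Lemma ImPsym X Xs Y Ys : is_adjoint ip X Xs -> is_adjoint ip Y Ys ->
  hsfin X -> hsfin Y ->
  rsum (fun i => Im (ip (X (e i)) (Y (e i)))) = rsum (fun i => Im (ip (Ys (e i)) (Xs (e i)))).
Proof.
move=> aX aY hX hY.
rewrite (rsum_ext (g := fun i => Re (ip (X (e i)) ('i%C *: Y (e i))))); last first.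
  by move=> i; rewrite ImIP_Re.
rewrite (RePsym aX (adj_scale 'i%C aY) hX (hsfin_scale _ hY)).
apply: rsum_ext => i; rewrite ipZl // ReM /=; ring.
Qed.

End Parseval.

Section Pointwise.
Variable R : realType.
Local Notation C := R[i].
Local Notation Re := complex.Re.
Local Notation Im := complex.Im.
Variable V : lmodType C.
Variable ip : V -> V -> C.
Hypothesis ipax : inner_product_axioms ip.
Local Notation qn := (q ip).

Lemma inv2C : (2^-1 : C) = (2^-1 : R)%:C%C.
Proof. by rewrite fmorphV rmorph_nat. Qed.

Lemma n2_inv2 : n2 (2^-1 : C) = 4^-1.
Proof. rewrite inv2C /n2 /= expr0n /= addr0; by field. Qed.

Lemma qT_point (w : C) (a b c d : V) : n2 w = 2^-1 ->
  qn (2^-1 *: ((w *: a + w *: b) + (conjc w *: c + conjc w *: d))) =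
  8^-1 * (qn a + qn b + qn c + qn d + 2 * Re (ip a b) + 2 * Re (ip c d)) +
  2^-1 * (Re (w * w) * (Re (ip a c) + Re (ip a d) + Re (ip b c) + Re (ip b d))
        - Im (w * w) * (Im (ip a c) + Im (ip a d) + Im (ip b c) + Im (ip b d))).
Proof.
move=> hw.
rewrite (qZ ipax) n2_inv2 (qD ipax) -!scalerDr !(qZ ipax) n2J hw !(qD ipax).
rewrite (ipZl ipax) (ipZr ipax) conjK mulrA; set x := w * w.
rewrite ReM !(ipDl ipax) !(ipDr ipax) !ReD !ImD.
by field.
Qed.

Lemma qT_bound (al l1 l2 : C) (a b c d : V) : n2 al = 1 -> n2 l1 <= 1 -> n2 l2 <= 1 ->
  qn (2^-1 *: (al *: (l1 *: a + l2 *: b) + conjc al *: (conjc l1 *: c + conjc l2 *: d)))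
  <= qn a + qn b + qn c + qn d.
Proof.
move=> hal h1 h2.
rewrite qZ // n2_inv2.
have hu : qn (al *: (l1 *: a + l2 *: b)) <= 2 * qn a + 2 * qn b.
  rewrite qZ // hal mul1r; apply: le_trans (q_le2 ipax _ _) _.
  rewrite !qZ //.
  have := ler_piMl (q_ge0 ipax a) h1; have := ler_piMl (q_ge0 ipax b) h2.
  move: (qn a) (qn b) (n2 l1 * qn a) (n2 l2 * qn b) => x y u v; lra.
have hv : qn (conjc al *: (conjc l1 *: c + conjc l2 *: d)) <= 2 * qn c + 2 * qn d.
  rewrite qZ // n2J hal mul1r; apply: le_trans (q_le2 ipax _ _) _.
  rewrite !qZ // !n2J.
  have := ler_piMl (q_ge0 ipax c) h1; have := ler_piMl (q_ge0 ipax d) h2.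
  move: (qn c) (qn d) (n2 l1 * qn c) (n2 l2 * qn d) => x y u v; lra.
have := q_le2 ipax (al *: (l1 *: a + l2 *: b)) (conjc al *: (conjc l1 *: c + conjc l2 *: d)).
move: (qn (_ + _)) (qn (al *: _)) (qn (conjc al *: _)) hu hv => s u v hu hv h.
move: hu hv h.
have := q_ge0 ipax a; have := q_ge0 ipax b; have := q_ge0 ipax c; have := q_ge0 ipax d.
move: (qn a) (qn b) (qn c) (qn d) => x1 x2 x3 x4; lra.
Qed.

End Pointwise.

Lemma phase (R : realType) (Z : R[i]) : exists x : R[i],
  n2 x = 4^-1 /\ complex.Re x * complex.Re Z - complex.Im x * complex.Im Z
                 = ComplexField.Normc.normc Z / 2.
Proof.
set N := ComplexField.Normc.normc Z.
have hN : N ^+ 2 = n2 Z by rewrite normc_n2.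
have [Z0|Zn0] := eqVneq Z 0.
  exists ((2^-1 : R)%:C)%C; split; first by rewrite /n2 /= expr0n /= addr0; field.
  have -> : N = 0 by rewrite /N Z0 ComplexField.Normc.normc0.
  by rewrite Z0 /= !mulr0 subr0 mul0r.
have N0 : N != 0.
  apply/eqP => h; move: Zn0; rewrite (ComplexField.Normc.eq0_normc h) eqxx //.
exists (complex.Complex (complex.Re Z / (2 * N)) (- (complex.Im Z / (2 * N)))); split.
  rewrite /n2 /=; move: hN; rewrite /n2 => hN.
  rewrite sqrrN !expr_div_n -mulrDl -hN; by field.
rewrite /=; move: hN; rewrite /n2 => hN.
rewrite (_ : _ - _ = (complex.Re Z ^+ 2 + complex.Im Z ^+ 2) / (2 * N)); last by field.
rewrite -hN; by field.
Qed.
Local Open Scope classical_set_scope.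

Lemma hs_sumE (R : realType) (V : lmodType R[i]) (ip : V -> V -> R[i])
  (ipax : inner_product_axioms ip) (I : choiceType) (e : I -> V) X :
  hs_sum ip e X = Es (hq ip e X).
Proof.
rewrite /hs_sum /Es; apply: eq_esum => i _.
by rewrite /vnorm sqr_sqrtr //; exact: (q_ge0 ipax).
Qed.

Lemma expi0 (R : realType) : expi (0 : R) = 1.
Proof. by rewrite /expi cos0 sin0. Qed.

Lemma n2_expi (R : realType) (t : R) : n2 (expi t) = 1.
Proof. by rewrite /n2 /expi /= cos2Dsin2. Qed.

Lemma Re2M (R : realType) (t : R[i]) : complex.Re (2 * t) = 2 * complex.Re t.
Proof. by rewrite mulr_natl mulr2n ReD -mulr2n mulr_natl. Qed.
Lemma Im2M (R : realType) (t : R[i]) : complex.Im (2 * t) = 2 * complex.Im t.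
Proof. by rewrite mulr_natl mulr2n ImD -mulr2n mulr_natl. Qed.

Ltac smt ipax := match goal with
 | |- sm (fun i => @?f i + @?g i) => apply: smD; smt ipax
 | |- sm (fun i => - @?f i) => apply: smN; smt ipax
 | |- sm (fun i => ?c * @?f i) => apply: smZ; smt ipax
 | |- sm (hq _ _ _) => apply: (sm_hq ipax); assumption
 | |- sm (fun i => complex.Re (@?h i)) => apply: (sm_Re ipax); assumption
 | |- sm (fun i => complex.Im (@?h i)) => apply: (sm_Im ipax); assumption
 end.

Theorem theorem3p1 (R : realType) (V : lmodType R[i]) (ip : V -> V -> R[i])
  (I : choiceType) (e : I -> V)
  (B Bs C Cs : V -> V) :
  hilbert_space ip ->
  orthonormal_basis ip e ->
  hilbert_schmidt ip e B -> hilbert_schmidt ip e C ->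
  is_adjoint ip B Bs -> is_adjoint ip C Cs ->
  (w2e ip e B Bs C Cs) ^+ 2 >=
    4^-1 * ComplexField.Normc.normc (trace ip e (fun x => B (B x))
                          + trace ip e (fun x => C (C x))
                          + 2 * trace ip e (fun x => B (C x)))
  + 4^-1 * (hs_norm ip e B ^+ 2 + hs_norm ip e C ^+ 2
            + 2 * complex.Re (trace ip e (fun x => B (Cs x)))).
Proof.
move=> [ipax hcomp] onb [_ hB] [_ hC] aB aC.
have fB : hsfin ip e B by rewrite /hsfin /fin -(hs_sumE ipax).
have fC : hsfin ip e C by rewrite /hsfin /fin -(hs_sumE ipax).
have fBs := hsfin_adj ipax hcomp onb aB fB.
have fCs := hsfin_adj ipax hcomp onb aC fC.
have hsnE : forall X, hs_norm ip e X = Num.sqrt (S (hq ip e X)).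
  by move=> X; rewrite /hs_norm (hs_sumE ipax).
have hsn2 : forall X, hs_norm ip e X ^+ 2 = S (hq ip e X).
  by move=> X; rewrite hsnE sqr_sqrtr // S_ge0 // => i; apply: q_ge0.
rewrite /w2e; set E := (X in sup X).
have sumf : fin (fun i => hq ip e B i + hq ip e C i + hq ip e Bs i + hq ip e Cs i).
  have g0 := fun X i => q_ge0 ipax (X (e i)).
  apply: finD; [| |apply: finD; [| |apply: finD|]|]; rewrite //.
  all: try (by move=> i; apply: g0).
  all: try (by move=> i; rewrite !addr_ge0 //; apply: g0).
have bnd : forall (l1 l2 : R[i]) (t : R), n2 l1 <= 1 -> n2 l2 <= 1 -> forall i,
  hq ip e (re_op (fun x => expi t *: (l1 *: B x + l2 *: C x))
        (fun x => conjc (expi t) *: (conjc l1 *: Bs x + conjc l2 *: Cs x))) i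
  <= hq ip e B i + hq ip e C i + hq ip e Bs i + hq ip e Cs i.
  move=> l1 l2 t h1 h2 i; rewrite /hq /re_op.
  exact: (qT_bound ipax _ _ _ _ (n2_expi t) h1 h2).
have Eub : forall r, E r -> r <= Num.sqrt (S (fun i => hq ip e B i + hq ip e C i + hq ip e Bs i + hq ip e Cs i)).
  move=> r [l1 [l2 [t [hl ->]]]].
  rewrite !normc_n2 in hl.
  have h1 : n2 l1 <= 1 by have := n2_ge0 l2; move: (n2 l1) (n2 l2) hl => a b; lra.
  have h2 : n2 l2 <= 1 by have := n2_ge0 l1; move: (n2 l1) (n2 l2) hl => a b; lra.
  rewrite hsnE ler_sqrt; last first.
    by apply: S_ge0 => i; rewrite !addr_ge0 //; apply: q_ge0.
  apply: S_le => [i|i|//]; first exact: q_ge0.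
  exact: bnd.
have hub : has_ubound E by exists (Num.sqrt (S (fun i => hq ip e B i + hq ip e C i + hq ip e Bs i + hq ip e Cs i))).
set Z := trace ip e (fun x => B (B x)) + trace ip e (fun x => C (C x)) + 2 * trace ip e (fun x => B (C x)).
have [x [hx2 hxZ]] := phase Z.
pose w := sqrtc x.
have hww : w * w = x by rewrite -expr2 sqr_sqrtc.
have hw : n2 w = 2^-1.
  have h := n2M w w; rewrite hww hx2 in h; have h0 := n2_ge0 w.
  move: (n2 w) h h0 => a h h0.
  have : (a - 2^-1) * (a + 2^-1) = 0.
    have -> : (a - 2^-1) * (a + 2^-1) = a * a - 4^-1 by field.
    by rewrite -h subrr.
  move/eqP; rewrite mulf_eq0 => /orP[/eqP h1|/eqP h1]; first by apply/eqP; rewrite -subr_eq0 h1.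
  by move: h1; lra.
pose T := re_op (fun v => expi 0 *: (w *: B v + w *: C v))
    (fun v => conjc (expi 0) *: (conjc w *: Bs v + conjc w *: Cs v)).
have ET : E (hs_norm ip e T).
  exists w, w, 0; split => //; rewrite !normc_n2 hw; lra.
have le1 : hs_norm ip e T <= sup E := ub_le_sup hub ET.
have hT0 : 0 <= hs_norm ip e T by rewrite hsnE sqrtr_ge0.
have fT : fin (hq ip e T).
  apply: fin_le sumf => i; apply: bnd; rewrite hw; lra.
suff key : hs_norm ip e T ^+ 2 =
    4^-1 * ComplexField.Normc.normc Z
  + 4^-1 * (hs_norm ip e B ^+ 2 + hs_norm ip e C ^+ 2
            + 2 * complex.Re (trace ip e (fun x => B (Cs x)))).
  by rewrite -key !expr2; apply: ler_pM.
rewrite hsn2 -(rsum_hq ipax fT).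
rewrite (rsum_ext (g := fun i =>
  8^-1 * (hq ip e B i + hq ip e C i + hq ip e Bs i + hq ip e Cs i
          + 2 * complex.Re (ip (B (e i)) (C (e i))) + 2 * complex.Re (ip (Bs (e i)) (Cs (e i))))
  + 2^-1 * (complex.Re x * (complex.Re (ip (B (e i)) (Bs (e i))) + complex.Re (ip (B (e i)) (Cs (e i)))
                           + complex.Re (ip (C (e i)) (Bs (e i))) + complex.Re (ip (C (e i)) (Cs (e i))))
          - complex.Im x * (complex.Im (ip (B (e i)) (Bs (e i))) + complex.Im (ip (B (e i)) (Cs (e i)))
                           + complex.Im (ip (C (e i)) (Bs (e i))) + complex.Im (ip (C (e i)) (Cs (e i))))))); last first.
  move=> i; rewrite /hq /T /re_op expi0 conjc1 !scale1r (qT_point ipax _ _ _ _ hw) hww //.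
rewrite !(rsumD, rsumZ, rsumN); try by smt ipax.
rewrite !(rsum_hq ipax) // -(S_adj ipax hcomp onb aB) -(S_adj ipax hcomp onb aC).
rewrite (RePsym ipax hcomp onb aB (adj_sym ipax aC) fB fCs).
rewrite (ImPsym ipax hcomp onb aB (adj_sym ipax aC) fB fCs).
have r1 := RePsym ipax hcomp onb (adj_sym ipax aC) (adj_sym ipax aB) fCs fBs.
have r2 : rsum (fun i => complex.Re (ip (Bs (e i)) (Cs (e i)))) =
          rsum (fun i => complex.Re (ip (Cs (e i)) (Bs (e i)))).
  by apply: rsum_ext => i; rewrite (ReIPsym ipax).
have tr : forall X Y Ys, is_adjoint ip Y Ys ->
    trace ip e (fun v => Y (X v)) = csum (fun i => ip (X (e i)) (Ys (e i))).
  by move=> X Y Ys aY; rewrite /trace; congr csum; apply/funext => i; rewrite aY.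
have hRe : complex.Re Z = rsum (fun i => complex.Re (ip (B (e i)) (Bs (e i))))
    + rsum (fun i => complex.Re (ip (C (e i)) (Cs (e i))))
    + 2 * rsum (fun i => complex.Re (ip (C (e i)) (Bs (e i)))).
  by rewrite /Z !ReD Re2M !(tr _ _ _ aB) (tr _ _ _ aC).
have hIm : complex.Im Z = rsum (fun i => complex.Im (ip (B (e i)) (Bs (e i))))
    + rsum (fun i => complex.Im (ip (C (e i)) (Cs (e i))))
    + 2 * rsum (fun i => complex.Im (ip (C (e i)) (Bs (e i)))).
  by rewrite /Z !ImD Im2M !(tr _ _ _ aB) (tr _ _ _ aC).
have hBCs : complex.Re (trace ip e (fun v => B (Cs v))) =
    rsum (fun i => complex.Re (ip (Cs (e i)) (Bs (e i)))) by rewrite (tr _ _ _ aB).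
have hN : ComplexField.Normc.normc Z = 2 * (complex.Re x * complex.Re Z - complex.Im x * complex.Im Z).
  by rewrite hxZ; field.
rewrite hN hRe hIm hBCs !hsn2 r2 r1.
by field.
Qed.
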